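(* For all $y,k\in\mathbb N_0$, we have $y+2k+\{4,6,7,8,10,11\}+4\cdot[0,k]\in\mathcal L(C_2^5)$.
   Context: $C_2^r$ denotes an elementary abelian $2$-group of rank $r$; $[a,b]=\{x\in\mathbb Z:a\le x\le b\}$. For $L,L'\subset\mathbb Z$ and $y,k\in\mathbb Z$: $L+L'=\{a+b:a\in L,b\in L'\}$, $y+L=\{y\}+L$, and $k\cdot L=\{ka:a\in L\}$ (so $4\cdot[0,k]=\{0,4,\dots,4k\}$). For a subset $G_0$ of a finite abelian group $G$, a sequence over $G_0$ is an element of the free abelian monoid $\mathcal F(G_0)$ with basis $G_0$ (a finite unordered list of elements of $G_0$, repetitions allowed). $\mathcal B(G_0)$ is the monoid of zero-sum sequences over $G_0$ (including the empty sequence). An atom is a minimal zero-sum sequence, i.e. a nonempty zero-sum sequence that is not a product of two nonempty zero-sum sequences. For $B\in\mathcal B(G_0)$, $\mathsf L(B)=\{k\in\mathbb N_0: B \text{ is a product of } k \text{ atoms}\}$, and $\mathcal L(G_0)=\{\mathsf L(B):B\in\mathcal B(G_0)\}$; $\mathcal L(G)$ is the case $G_0=G$. *)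

(* Defs.v *)
From mathcomp Require Import all_boot all_algebra.
Set Implicit Arguments. Unset Strict Implicit. Unset Printing Implicit Defensive.
Import GRing.Theory.
Local Open Scope ring_scope.

Definition C2r (r : nat) := 'rV['Z_2]_r.

Section ZeroSum.
Variable G : finZmodType.

(* A sequence over G (element of the free abelian monoid F(G)) is given by its
   multiplicity function; since G is finite this is exactly F(G). *)
Definition fseq := {ffun G -> nat}.

Definition fseq_one : fseq := [ffun => 0%N].
Definition fseq_mul (S T : fseq) : fseq := [ffun g => (S g + T g)%N].
Definition fseq_len (S : fseq) : nat := (\sum_(g : G) S g)%N.
Definition fseq_sigma (S : fseq) : G := \sum_(g : G) g *+ S g.

Definition zero_sum (S : fseq) : Prop := fseq_sigma S = 0.

Definition atom (A : fseq) : Prop :=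
  zero_sum A /\ (0 < fseq_len A)%N /\
  ~ (exists B C : fseq, [/\ zero_sum B, zero_sum C, (0 < fseq_len B)%N,
                          (0 < fseq_len C)%N & A = fseq_mul B C]).

Definition in_lengths (B : fseq) (k : nat) : Prop :=
  exists s : seq fseq, [/\ size s = k, (forall A, A \in s -> atom A)
                        & B = foldr fseq_mul fseq_one s].

Definition in_system_of_lengths (L : nat -> Prop) : Prop :=
  exists B : fseq, zero_sum B /\ (forall k, in_lengths B k <-> L k).
End ZeroSum.

Definition L3p10 (y k : nat) (n : nat) : Prop :=
  exists j i : nat, [/\ j \in [:: 4; 6; 7; 8; 10; 11]%N, (i <= k)%N
                      & n = (y + 2 * k + j + 4 * i)%N].

(* Main.v *)
Require Import Defs.
From mathcomp Require Import all_boot all_algebra zify.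
Set Implicit Arguments. Unset Strict Implicit. Unset Printing Implicit Defensive.
Import GRing.Theory.

Definition bits : seq (seq nat) :=
  [:: [::0;0;0;0;0]; [::1;1;1;1;1]; [::1;0;0;0;0]; [::0;1;0;0;0]; [::0;0;1;0;0];
      [::0;0;0;1;0]; [::0;0;0;0;1]; [::1;1;1;0;0]; [::1;1;0;1;0]].
Definition row_of (b : seq nat) : C2r 5 := (\row_(j < 5) ((nth 0 b j)%:R : 'Z_2))%R.
Definition gl : seq (C2r 5) := map row_of bits.
Definition hh (r : C2r 5) : seq nat := [seq (val (r ord0 (inord j))) | j <- iota 0 5].
Lemma hh_row b : hh (row_of b) = [seq nth 0 b j %% 2 | j <- iota 0 5].
Proof.
rewrite /hh; apply/eq_in_map => j; rewrite mem_iota => /andP [_ Hj].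
by rewrite mxE inordK // Zp_nat.
Qed.
Lemma gl_uniq : uniq gl.
Proof.
apply: (@map_uniq _ _ hh). rewrite /gl -map_comp.
rewrite (eq_map (g := fun b => [seq nth 0 b j %% 2 | j <- iota 0 5])); last first.
  by move=> b /=; rewrite hh_row.
by vm_compute.
Qed.
Definition par (v : seq nat) : bool :=
  all (fun j => ~~ odd (sumn [seq nth 0 (nth [::] bits i) j * nth 0 v i | i <- iota 0 9])) (iota 0 5).

Definition sq (p : nat) : seq nat := [seq (if i == p then 2 else 0) | i <- iota 0 9].

Definition atoms : seq (seq nat) :=
  [:: [::1;0;0;0;0;0;0;0;0]; sq 1; sq 2; sq 3; sq 4; sq 5; sq 6; sq 7; sq 8;
      [::0;1;1;1;1;1;1;0;0];
      [::0;0;1;1;1;0;0;1;0];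
      [::0;1;0;0;0;1;1;1;0];
      [::0;0;1;1;0;1;0;0;1];
      [::0;1;0;0;1;0;1;0;1];
      [::0;0;0;0;1;1;0;1;1];
      [::0;1;1;1;0;0;1;1;1]].

Definition subvecs (w : seq nat) : seq (seq nat) :=
  foldr (fun a acc => flatten [seq [seq x :: t | t <- acc] | x <- iota 0 a.+1]) [:: [::]] w.

Definition chkAtom (w : seq nat) : bool :=
  all (fun u => ~~ par u || (u == nseq 9 0) || (u == w)) (subvecs w).

Definition chkClass : bool :=
  all (fun u => ~~ has (leq 1) u || has (fun a => all2 leq a u) atoms ||
                 (all (fun x => x <= 1) u && ~~ par u)) (subvecs (nseq 9 2)).

Lemma chk1 : all chkAtom atoms. Proof. by vm_compute. Qed.
Lemma chk2 : chkClass. Proof. by vm_compute. Qed.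
Lemma chk3 : all (fun a => par a && has (leq 1) a && (size a == 9)) atoms && uniq atoms.
Proof. by vm_compute. Qed.

Definition mk (v : seq nat) : fseq (C2r 5) := [ffun g => nth 0 v (index g gl)].

Lemma sigma_mk v : size v <= 9 ->
  fseq_sigma (mk v) = (\sum_(0 <= i < 9) nth 0 gl i *+ nth 0 v i)%R.
Proof.
move=> Hv; rewrite /fseq_sigma (bigID (fun g => g \in gl)) /=.
rewrite [X in (_ + X)%R]big1 ?GRing.addr0; last first.
  by move=> g /memNindex Hg; rewrite ffunE Hg nth_default.
rewrite -(big_uniq _ gl_uniq).
have -> : (\sum_(i <- gl) i *+ mk v i = \sum_(0 <= i < size gl) nth 0 gl i *+ mk v (nth 0 gl i))%R.
  exact: big_nth.
apply: eq_big_nat => i Hi; rewrite ffunE index_uniq //; last exact: gl_uniq.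

Qed.

Lemma Z2_natr0 m : ((m%:R : 'Z_2) = 0)%R <-> ~~ odd m.
Proof.
rewrite Zp_nat; split => [H | H].
  have H' := congr1 val H; change (m %% 2 = 0) in H'.
  by move: H'; rewrite modn2; case: (odd m).
apply: val_inj; change (m %% 2 = 0); by rewrite modn2 (negbTE H).
Qed.

Lemma zs_mk v : size v <= 9 -> zero_sum (mk v) <-> par v.
Proof.
move=> Hv; rewrite /zero_sum sigma_mk //.
have coord : forall j : 'I_5,
  ((\sum_(0 <= i < 9) nth 0 gl i *+ nth 0 v i) ord0 j)%R =
  ((sumn [seq nth 0 (nth [::] bits i) j * nth 0 v i | i <- iota 0 9])%:R)%R.
  move=> j; rewrite summxE sumnE big_map natr_sum.
  apply: eq_big_nat => i /andP [_ Hi].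
  rewrite mulmxnE (nth_map [::]) // mxE.
  by rewrite natrM mulr_natr.
split => [H | H].
  apply/allP => j; rewrite mem_iota add0n => /andP [_ Hj].
  apply/Z2_natr0.
  have := coord (Ordinal Hj); rewrite H mxE => <- //.
apply/rowP => j; rewrite coord mxE; apply/Z2_natr0.
by move/allP: H; apply; rewrite mem_iota add0n ltn_ord.
Qed.

Definition g0 : C2r 5 := 0%R.

Definition vec (A : fseq (C2r 5)) : seq nat := map A gl.
Definition supp (A : fseq (C2r 5)) := forall g, g \notin gl -> A g = 0.

Lemma size_gl : size gl = 9. Proof. by []. Qed.
Lemma size_vec A : size (vec A) = 9. Proof. by rewrite size_map. Qed.

Lemma mk_vec A : supp A -> mk (vec A) = A.
Proof.
move=> HA; apply/ffunP => g; rewrite ffunE; case: (boolP (g \in gl)) => Hg.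
  by rewrite /vec (nth_map g0) ?index_mem // nth_index.
by rewrite memNindex // nth_default ?size_vec // HA.
Qed.

Lemma vec_mk v : size v = 9 -> vec (mk v) = v.
Proof.
move=> Hv; apply: (@eq_from_nth _ 0); first by rewrite size_vec Hv.
move=> i; rewrite size_vec => Hi.
by rewrite /vec (nth_map g0) // ffunE index_uniq //; exact: gl_uniq.
Qed.

Lemma supp_mk v : size v <= 9 -> supp (mk v).
Proof. by move=> Hv g Hg; rewrite ffunE memNindex // nth_default. Qed.

Lemma nth_vec A i : i < 9 -> nth 0 (vec A) i = A (nth g0 gl i).
Proof. by move=> Hi; rewrite /vec (nth_map g0). Qed.

Lemma len_pos (A : fseq (C2r 5)) (g : C2r 5) : 0 < A g -> 0 < fseq_len A.
Proof. by move=> H; rewrite /fseq_len (bigD1 g) //=; apply: leq_trans H (leq_addr _ _). Qed.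

Lemma len_pos_ex (A : fseq (C2r 5)) : 0 < fseq_len A -> exists g, 0 < A g.
Proof.
move=> H; case: (pickP (fun g => 0 < A g)) => [g Hg | H0]; first by exists g.
move: H; rewrite /fseq_len big1 // => g _.
by move: (H0 g) => /=; rewrite lt0n => /negbFE/eqP.
Qed.

Lemma haspos_vec (A : fseq (C2r 5)) : supp A -> 0 < fseq_len A -> has (leq 1) (vec A).
Proof.
move=> HA /len_pos_ex [g Hg]; case: (boolP (g \in gl)) => Hgl.
  by apply/hasP; exists (A g) => //; apply: map_f.
by move: Hg; rewrite HA.
Qed.

Lemma len_of_has v : size v <= 9 -> has (leq 1) v -> 0 < fseq_len (mk v).
Proof.
move=> Hv /hasP [x Hx H1].
have Hi : index x v < 9 by apply: leq_trans Hv; rewrite index_mem.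
apply: (@len_pos _ (nth g0 gl (index x v))).
by rewrite ffunE index_uniq ?nth_index //; exact: gl_uniq.
Qed.

Lemma all2leqP u w : all2 leq u w <-> size u = size w /\ forall i, nth 0 u i <= nth 0 w i.
Proof.
elim: u w => [|a u IH] [|b w] //=.
- split=> // [[_ H]] //.
- split=> [_|[]] //; split=> // i; by rewrite nth_nil.
- split.
    move=> /andP [Hab /IH [Hs H]]; split; first by rewrite Hs.
    by case.
  move=> [[Hs] H]; apply/andP; split; first exact: (H 0).
  by apply/IH; split=> // i; exact: (H i.+1).
Qed.

Lemma sigma_mul (B C : fseq (C2r 5)) : fseq_sigma (fseq_mul B C) = (fseq_sigma B + fseq_sigma C)%R.
Proof.
rewrite /fseq_sigma -big_split; apply: eq_bigr => g _.
by rewrite ffunE mulrnDr.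
Qed.

Lemma mem_subvecs u w : all2 leq u w -> u \in subvecs w.
Proof.
elim: w u => [|b w IH] [|a u] // H.
have /andP [Hab Hu] : (a <= b) && all2 leq u w := H.
change (a :: u \in flatten [seq [seq x :: t | t <- subvecs w] | x <- iota 0 b.+1]).
apply/flattenP; exists [seq a :: t | t <- subvecs w].
  by apply: (map_f (fun x => [seq x :: t | t <- subvecs w])); rewrite mem_iota.
by apply: map_f; apply: IH.
Qed.

Lemma atoms_prop w : w \in atoms -> [/\ par w, has (leq 1) w, size w = 9 & chkAtom w].
Proof.
move=> Hw; have /andP [/allP H3 _] := chk3; have /allP H1 := chk1.
by case/andP: (H3 w Hw) => /andP [-> ->] /eqP ->; split => //; apply: H1.
Qed.

Lemma atom_mk w : w \in atoms -> atom (mk w).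
Proof.
case/atoms_prop => Hp Hh Hs Hc.
have Hs' : size w <= 9 by rewrite Hs.
split; first by apply/zs_mk.
split; first exact: len_of_has.
move=> [B [C [zB zC lB lC E]]].
have leB : forall g, B g <= mk w g by move=> g; rewrite E ffunE leq_addr.
have sB : supp B.
  by move=> g Hg; have := leB g; rewrite (supp_mk Hs' Hg) leqn0 => /eqP.
have Hu : all2 leq (vec B) w.
  apply/all2leqP; split; first by rewrite size_vec Hs.
  move=> i; case: (ltnP i 9) => Hi.
    by rewrite -[in X in _ <= X](vec_mk Hs) !nth_vec.
  by rewrite nth_default // size_vec.
have pu : par (vec B) by apply/zs_mk; rewrite ?size_vec ?mk_vec.
move: (allP Hc _ (mem_subvecs Hu)); rewrite pu /= => /orP [/eqP H0 | /eqP Hw].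
  by move: (haspos_vec sB lB); rewrite H0.
have HC : forall g, C g = 0.
  move=> g; move/ffunP: E => /(_ g); rewrite ffunE -(mk_vec sB) Hw.
  by rewrite /mk !ffunE => /eqP; lia.
by move: lC; rewrite /fseq_len big1.
Qed.

Lemma diff_idx a v : all2 leq a v -> a != v -> exists2 i, i < size v & nth 0 a i < nth 0 v i.
Proof.
elim: a v => [|x a IH] [|y v] //= /andP [Hxy Hav].
rewrite eqseq_cons negb_and => /orP [Hne | Hne].
  by exists 0 => //; rewrite ltn_neqAle Hne Hxy.
by case: (IH v Hav Hne) => i Hi Hl; exists i.+1.
Qed.

Lemma classify (A : fseq (C2r 5)) : atom A -> supp A -> vec A \in atoms.
Proof.
move=> [zA [lA nd]] sA.
have Hv : size (vec A) = 9 := size_vec A.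
have pv : par (vec A) by apply/zs_mk; rewrite ?Hv // mk_vec.
have hv : has (leq 1) (vec A) := haspos_vec sA lA.
have Hu : all2 leq (map (minn 2) (vec A)) (nseq 9 2).
  apply/all2leqP; split; first by rewrite size_map Hv.
  move=> i; case: (ltnP i 9) => Hi.
    by rewrite nth_nseq Hi (nth_map 0) ?Hv //; exact: geq_minl.
  by rewrite !nth_default ?size_map ?size_nseq ?Hv.
have := allP chk2 _ (mem_subvecs Hu).
case/orP => [/orP [Hn | Ha] | /andP [H1 Hnp]].
- exfalso; move/negP: Hn; apply; case/hasP: hv => x Hx H1.
  apply/hasP; exists (minn 2 x); first exact: map_f.
  by rewrite leq_min.
- case/hasP: Ha => a Ha Hau.
  have [pa ha sa _] := atoms_prop Ha.
  have Hav : all2 leq a (vec A).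
    move/all2leqP: Hau => [Hs H]; apply/all2leqP; split; first by rewrite Hs size_map.
    move=> i; apply: leq_trans (H i) _.
    case: (ltnP i 9) => Hi; first by rewrite (nth_map 0) ?Hv // geq_minr.
    by rewrite nth_default ?size_map ?Hv.
  case: (a =P vec A) => [<- // | Hne]; exfalso; apply: nd.
  have leA : forall g, mk a g <= A g.
    move=> g; rewrite ffunE; case: (boolP (g \in gl)) => Hg.
      move/all2leqP: Hav => [_ H]; apply: leq_trans (H _) _.
      by rewrite nth_vec ?nth_index // -size_gl index_mem.
    by rewrite memNindex // nth_default // sa.
  exists (mk a), [ffun g => A g - mk a g].
  have E : A = fseq_mul (mk a) [ffun g => A g - mk a g].
    by apply/ffunP => g; have := leA g; rewrite !ffunE => H; rewrite subnKC.
  have sa' : size a <= 9 by rewrite sa.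
  split => //.
  + by apply/zs_mk.
  + move: zA; rewrite /zero_sum {1}E sigma_mul.
    have -> : fseq_sigma (mk a) = 0%R by apply/zs_mk.
    by rewrite add0r.
  + exact: len_of_has.
  + have [i Hi Hl] := diff_idx Hav (introN eqP Hne).
    rewrite Hv in Hi.
    apply: (@len_pos _ (nth g0 gl i)); rewrite !ffunE index_uniq ?size_gl //; last exact: gl_uniq.
    by rewrite -nth_vec // subn_gt0.
- exfalso; move/negP: Hnp; apply.
  suff -> : map (minn 2) (vec A) = vec A by [].
  rewrite -[RHS]map_id; apply/eq_in_map => x Hx.
  have : minn 2 x <= 1 by move/allP: H1; apply; exact: map_f.
  by rewrite /minn; case: ltnP => //; case: x {Hx} => [|[|]].
Qed.

Lemma fold_val (s : seq (fseq (C2r 5))) g :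
  (foldr (@fseq_mul _) (fseq_one _) s) g = sumn [seq (A : fseq (C2r 5)) g | A <- s].
Proof. by elim: s => [|A s IH] /=; rewrite ffunE // IH. Qed.

Lemma le_fold (s : seq (fseq (C2r 5))) A g :
  A \in s -> A g <= (foldr (@fseq_mul _) (fseq_one _) s) g.
Proof.
rewrite fold_val; elim: s => [|B s IH] //=; rewrite in_cons => /orP [/eqP -> | H].
  exact: leq_addr.
by apply: leq_trans (IH H) _; exact: leq_addl.
Qed.

Lemma sumn_split (L : seq (seq nat)) (F G : seq nat -> nat) :
  sumn [seq F a + G a | a <- L] = sumn (map F L) + sumn (map G L).
Proof. by elim: L => [|a L IH] //=; rewrite IH; lia. Qed.

Lemma sumn_pick (L : seq (seq nat)) x (f : seq nat -> nat) : uniq L -> x \in L ->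
  sumn [seq (x == a) * f a | a <- L] = f x.
Proof.
elim: L => [|b L IH] //= /andP [Hb HL]; rewrite in_cons => /orP [/eqP Hx | Hx].
  subst b; rewrite eqxx mul1n.
  suff -> : sumn [seq (x == a) * f a | a <- L] = 0 by rewrite addn0.
  elim: L Hb {IH HL} => [|c L IH] //=; rewrite in_cons negb_or => /andP [Hc Hb].
  by rewrite (negbTE Hc) mul0n IH.
have -> : (x == b) = false by apply/eqP => E; subst b; rewrite Hx in Hb.
by rewrite mul0n IH.
Qed.

Lemma sumn_zero (L : seq (seq nat)) (f : seq nat -> nat) : sumn [seq 0 * f a | a <- L] = 0.
Proof. by elim: L. Qed.

Lemma count_sum (L ws : seq (seq nat)) (f : seq nat -> nat) : uniq L -> all (mem L) ws ->
  sumn (map f ws) = sumn [seq count_mem a ws * f a | a <- L].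
Proof.
move=> HL; elim: ws => [|x ws IH] /=; first by rewrite sumn_zero.
case/andP => Hx Hws.
have -> : [seq count_mem a (x :: ws) * f a | a <- L] =
          [seq (x == a) * f a + count_mem a ws * f a | a <- L].
  by apply: eq_map => a /=; rewrite -mulnDl.
by rewrite sumn_split sumn_pick // IH.
Qed.

Lemma uniq_atoms : uniq atoms.
Proof. by case/andP: chk3. Qed.

Lemma zs_fold (s : seq (fseq (C2r 5))) : (forall A, A \in s -> atom A) ->
  zero_sum (foldr (@fseq_mul _) (fseq_one _) s).
Proof.
elim: s => [|A s IH] /= H.
  by rewrite /zero_sum /fseq_sigma big1 // => g _; rewrite ffunE.
rewrite /zero_sum sigma_mul.
have [zA _] := H A (mem_head _ _).
rewrite zA IH ?addr0 // => B HB; apply: H; by rewrite in_cons HB orbT.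
Qed.

Definition build (cs : seq nat) : seq (fseq (C2r 5)) :=
  flatten [seq nseq p.1 (mk p.2) | p <- zip cs atoms].

Lemma mem_zip2 (cs : seq nat) (L : seq (seq nat)) p : p \in zip cs L -> p.2 \in L.
Proof.
elim: cs L => [|c cs IH] [|a L] //=; rewrite in_cons => /orP [/eqP -> | H].
  exact: mem_head.
by rewrite in_cons (IH L H) orbT.
Qed.

Lemma build_atoms cs A : A \in build cs -> atom A.
Proof.
case/flattenP => t /mapP [p Hp ->]; rewrite mem_nseq => /andP [_ /eqP ->].
exact: atom_mk (mem_zip2 Hp).
Qed.

Lemma build_val cs g : (foldr (@fseq_mul _) (fseq_one _) (build cs)) g =
  sumn [seq p.1 * nth 0 p.2 (index g gl) | p <- zip cs atoms].
Proof.
rewrite fold_val /build; elim: (zip cs atoms) => [|p P IH] //=.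
by rewrite map_cat sumn_cat IH map_nseq sumn_nseq ffunE mulnC.
Qed.

Lemma build_size cs : size (build cs) = sumn [seq p.1 | p <- zip cs atoms].
Proof.
rewrite /build; elim: (zip cs atoms) => [|p P IH] //=.
by rewrite size_cat IH size_nseq.
Qed.

Definition vB (y k : nat) : seq nat :=
  [:: y; 4 + 2 * k; 4 + 2 * k; 4 + 2 * k; 3 + 2 * k; 3 + 2 * k; 4 + 2 * k; 1; 1].

Lemma exist_len y k n cs :
  (forall i, nth 0 (vB y k) i = sumn [seq p.1 * nth 0 p.2 i | p <- zip cs atoms]) ->
  sumn [seq p.1 | p <- zip cs atoms] = n -> in_lengths (mk (vB y k)) n.
Proof.
move=> H Hn; exists (build cs); split.
- by rewrite build_size.
- exact: build_atoms.
- by apply/ffunP => g; rewrite build_val ffunE H.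
Qed.
Lemma fam0 y k n m : m <= k.+1 -> n = y + 2 * k + 4 + 4 * m -> L3p10 y k n.
Proof.
move=> Hm ->; case: (ltnP m k.+1) => H.
  by exists 4, m; split => //; lia.
by exists 8, k; split => //; lia.
Qed.
Lemma fam2 y k n m : m <= k.+1 -> n = y + 2 * k + 6 + 4 * m -> L3p10 y k n.
Proof.
move=> Hm ->; case: (ltnP m k.+1) => H.
  by exists 6, m; split => //; lia.
by exists 10, k; split => //; lia.
Qed.
Lemma fam3 y k n m : m <= k.+1 -> n = y + 2 * k + 7 + 4 * m -> L3p10 y k n.
Proof.
move=> Hm ->; case: (ltnP m k.+1) => H.
  by exists 7, m; split => //; lia.
by exists 11, k; split => //; lia.
Qed.

Lemma arith y k n cZ s0 s1 s2 s3 s4 s5 sf1 sf2 u x1a x1b x2a x2b y1 y2 :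
  cZ = y ->
  2 * s0 + u + x1b + x2b + y2 = 4 + 2 * k ->
  2 * s1 + u + x1a + x2a + y2 = 4 + 2 * k ->
  2 * s2 + u + x1a + x2a + y2 = 4 + 2 * k ->
  2 * s3 + u + x1a + x2b + y1 = 3 + 2 * k ->
  2 * s4 + u + x1b + x2a + y1 = 3 + 2 * k ->
  2 * s5 + u + x1b + x2b + y2 = 4 + 2 * k ->
  2 * sf1 + x1a + x1b + y1 + y2 = 1 ->
  2 * sf2 + x2a + x2b + y1 + y2 = 1 ->
  n = cZ + s0 + s1 + s2 + s3 + s4 + s5 + sf1 + sf2 + u + x1a + x1b + x2a + x2b + y1 + y2 ->
  L3p10 y k n.
Proof.
move=> Ez E0 E1 E2 E3 E4 E5 F1 F2 En.
have Hu := odd_double_half u; set q := u./2 in Hu; set b := odd u in Hu.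
have Hb : (b : nat) <= 1 by case: (b).
have [Hy1 | Hy1] : y1 = 1 \/ y1 = 0 by lia.
  apply: (@fam3 _ _ _ (k.+1 - q)); lia.
have [Hy2 | Hy2] : y2 = 1 \/ y2 = 0 by lia.
  apply: (@fam0 _ _ _ (k.+1 - q)); lia.
have [Ha | Ha] : x1a = 1 \/ x1a = 0 by lia.
  have [Hc | Hc] : x2a = 1 \/ x2a = 0 by lia.
    apply: (@fam2 _ _ _ (k.+1 - q)); lia.
  apply: (@fam0 _ _ _ (k.+1 - q)); lia.
have [Hc | Hc] : x2a = 1 \/ x2a = 0 by lia.
  apply: (@fam0 _ _ _ (k.+1 - q)); lia.
apply: (@fam2 _ _ _ (k.+1 - q)); lia.
Qed.

Lemma size_fold1 (s : seq (fseq (C2r 5))) : size s = sumn [seq 1 | _ <- map vec s].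
Proof. by elim: s => //= A s ->; lia. Qed.

Lemma arith' y k n (c : seq nat -> nat) :
  (forall i, i < 9 -> nth 0 (vB y k) i = sumn [seq c a * nth 0 a i | a <- atoms]) ->
  n = sumn [seq c a * 1 | a <- atoms] -> L3p10 y k n.
Proof.
move=> Eq En.
move: (Eq 0 isT) (Eq 1 isT) (Eq 2 isT) (Eq 3 isT) (Eq 4 isT) (Eq 5 isT) (Eq 6 isT) (Eq 7 isT) (Eq 8 isT) En.
rewrite /= => E0 E1 E2 E3 E4 E5 E6 E7 E8 En'.
apply: (@arith y k n (c [::1;0;0;0;0;0;0;0;0]) (c (sq 1))
  (c (sq 2)) (c (sq 3)) (c (sq 4)) (c (sq 5))
  (c (sq 6)) (c (sq 7)) (c (sq 8))
  (c [::0;1;1;1;1;1;1;0;0]) (c [::0;0;1;1;1;0;0;1;0])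
  (c [::0;1;0;0;0;1;1;1;0]) (c [::0;0;1;1;0;1;0;0;1])
  (c [::0;1;0;0;1;0;1;0;1]) (c [::0;0;0;0;1;1;0;1;1])
  (c [::0;1;1;1;0;0;1;1;1])); lia.
Qed.

Theorem lemma3p10 (y k : nat) :
  @in_system_of_lengths (C2r 5) (L3p10 y k).
Proof.
have Hex : forall n, L3p10 y k n -> in_lengths (mk (vB y k)) n.
  move=> n [j [i [Hj Hi ->]]].
  move: Hj; rewrite !inE => /orP [/eqP -> | /orP [/eqP -> | /orP [/eqP -> | /orP [/eqP -> | /orP [/eqP -> | /eqP ->]]]]].
  - have [m Hm] : exists m, m = k.+1 - i by eexists.
    apply: (@exist_len _ _ _ [:: y; (1+k-m); (1+k-m); (1+k-m); (1+k-m); (1+k-m); (1+k-m); 0; 0; (2 * m).+1; 0;0;0;0;0;1]).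
      by case => [|[|[|[|[|[|[|[|[|ii]]]]]]]]] /=; rewrite ?nth_nil; lia.
    rewrite /=; rewrite ?nth_nil; lia.
  - have [m Hm] : exists m, m = k.+1 - i by eexists.
    apply: (@exist_len _ _ _ [:: y; (2+k-m); (1+k-m); (1+k-m); (1+k-m); (1+k-m); (2+k-m); 0; 0; (2 * m); 1;0;1;0;0;0]).
      by case => [|[|[|[|[|[|[|[|[|ii]]]]]]]]] /=; rewrite ?nth_nil; lia.
    rewrite /=; rewrite ?nth_nil; lia.
  - have [m Hm] : exists m, m = k.+1 - i by eexists.
    apply: (@exist_len _ _ _ [:: y; (2+k-m); (2+k-m); (2+k-m); (1+k-m); (1+k-m); (2+k-m); 0; 0; (2 * m); 0;0;0;0;1;0]).
      by case => [|[|[|[|[|[|[|[|[|ii]]]]]]]]] /=; rewrite ?nth_nil; lia.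
    rewrite /=; rewrite ?nth_nil; lia.
  - have [m Hm] : exists m, m = k - i by eexists.
    apply: (@exist_len _ _ _ [:: y; (1+k-m); (1+k-m); (1+k-m); (1+k-m); (1+k-m); (1+k-m); 0; 0; (2 * m).+1; 0;0;0;0;0;1]).
      by case => [|[|[|[|[|[|[|[|[|ii]]]]]]]]] /=; rewrite ?nth_nil; lia.
    rewrite /=; rewrite ?nth_nil; lia.
  - have [m Hm] : exists m, m = k - i by eexists.
    apply: (@exist_len _ _ _ [:: y; (2+k-m); (1+k-m); (1+k-m); (1+k-m); (1+k-m); (2+k-m); 0; 0; (2 * m); 1;0;1;0;0;0]).
      by case => [|[|[|[|[|[|[|[|[|ii]]]]]]]]] /=; rewrite ?nth_nil; lia.
    rewrite /=; rewrite ?nth_nil; lia.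
  - have [m Hm] : exists m, m = k - i by eexists.
    apply: (@exist_len _ _ _ [:: y; (2+k-m); (2+k-m); (2+k-m); (1+k-m); (1+k-m); (2+k-m); 0; 0; (2 * m); 0;0;0;0;1;0]).
      by case => [|[|[|[|[|[|[|[|[|ii]]]]]]]]] /=; rewrite ?nth_nil; lia.
    rewrite /=; rewrite ?nth_nil; lia.
exists (mk (vB y k)); split.
  have [s [_ Hs ->]] := Hex (y + 2 * k + 4 + 4 * 0) (ex_intro _ 4 (ex_intro _ 0 (And3 (isT : 4 \in [:: 4; 6; 7; 8; 10; 11]) (leq0n k) erefl))).
  exact: zs_fold.
move=> n; split; last exact: Hex.
move=> [s [Hsz Hat HB]].
have sA : forall A, A \in s -> supp A.
  by move=> A HA g Hg; have := le_fold g HA; rewrite -HB (supp_mk _ Hg) // leqn0 => /eqP.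
have cl : all (mem atoms) (map vec s).
  by apply/allP => w /mapP [B0 HB0 ->]; apply: classify; [apply: Hat | apply: sA].
have Eq : forall i, i < 9 ->
    nth 0 (vB y k) i = sumn [seq count_mem a (map vec s) * nth 0 a i | a <- atoms].
  move=> i Hi; rewrite -(count_sum (fun a => nth 0 a i) uniq_atoms cl) -map_comp.
  rewrite -[in LHS](vec_mk (v := vB y k)) // nth_vec // HB fold_val.
  by congr sumn; apply: eq_map => A /=; rewrite nth_vec.
have En : n = sumn [seq count_mem a (map vec s) * 1 | a <- atoms].
  by rewrite -(count_sum (fun _ => 1) uniq_atoms cl) -Hsz size_fold1.
exact: (arith' Eq En).
Qed.
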